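(* Let $M_t$ be the spherical mean curvature flow of isoparametric hypersurfaces in $S^{n+1}$ with $g$ distinct principal curvatures, with $M_0$ not minimal, and let $A(t),H(t)$ be its shape operator and scalar mean curvature. (1) If $g=1$, then $\|A(t)\|^2/H^2(t)\equiv 1/n$. (2) If $g\ge 2$, there exist $t_1>0$ and positive constants $c_1,c_2$ such that $$c_2e^{-2gnt}\le\frac{\|A(t)\|^2}{H^2(t)}\le c_1e^{-2gnt}\quad\text{for all } t<-t_1.$$
   Context: Let $M^n$ be a compact isoparametric hypersurface in the unit sphere $S^{n+1}\subset\mathbb{R}^{n+2}$ (constant principal curvatures) with $g$ distinct principal curvatures; then $g\in\{1,2,3,4,6\}$. Fix $x_0\in M$ and identify the 2-dimensional normal space $\nu_{x_0}M$ of $M$ in $\mathbb{R}^{n+2}$ with $\mathbb{C}$ so that the two focal submanifolds $M_+$, $M_-$ ($\dim M_+\le\dim M_-$) meet the normal circle at $1$ and $e^{i\pi/g}$ (the intersection points closest to $x_0$). The Weyl chamber is $C=\{re^{i\theta}:r>0,\ 0<\theta<\pi/g\}$. For $k=1,\dots,g$ let $\theta_k=k\pi/g-\pi/2$, $\alpha_k=e^{i\theta_k}$, and $m_k=m_1$ for $k$ odd, $m_k=m_2$ for $k$ even, where $(m_1,m_2)$, $m_1\le m_2$, is the multiplicity data of the principal curvatures; $m_1=m_2$ if $g$ is odd, and $(m_1+m_2)g=2n$. For $x\in C$, $M_x=\{p+\tilde\xi(p):p\in M\}$ where $\tilde\xi$ is the parallel normal field on $M$ with $\tilde\xi(x_0)=x-x_0$;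 it is an $n$-dimensional isoparametric submanifold of $\mathbb{R}^{n+2}$ lying in $S^{n+1}(|x|)$, with normal space $\nu_{x_0}M$ at $x$, and $T_xM_x=\oplus_kE_k$, $\dim E_k=m_k$, with Euclidean shape operator $A_\xi|_{E_k}=\langle\xi,-\alpha_k/\langle x,\alpha_k\rangle\rangle\mathrm{Id}$ ($\langle\cdot,\cdot\rangle$ the real inner product on $\mathbb{C}=\mathbb{R}^2$). $H^E(x),A^E(x)$ denote mean curvature vector and shape operator of $M_x$ at $x$ in $\mathbb{R}^{n+2}$; $H^S(x),A^S(x)$ those of $M_x$ as a hypersurface of $S^{n+1}(|x|)$; $\|A\|^2$ is the sum of squared Hilbert–Schmidt norms over an orthonormal normal basis. Set $\delta=(m_2-m_1)/(m_2+m_1)$ if $g\ge2$ and $\delta=0$ if $g=1$, and let $\theta_{\min}\in(0,\pi/g)$ be defined by $\cos g\theta_{\min}=-\delta$. The spherical MCF of $M_{y(0)}$ is the family $M_t=M_{y(t)}$ with $y(t)\in C$ unit and $y'(t)=H^S(y(t))$; it exists for all $t\le 0$; $A(t)=A^S(y(t))$ and $H^2(t)=\|H^S(y(t))\|^2$. *)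

(* Defs.v *)
From Stdlib Require Import Reals Lra Lia List.
Open Scope R_scope.

(* The normal plane nu_{x0} M is identified with C = R^2, points as pairs. *)
Definition vec := (R * R)%type.

Definition inner (a b : vec) : R := fst a * fst b + snd a * snd b.
Definition vnorm (a : vec) : R := sqrt (inner a a).

Definition sumk (g : nat) (f : nat -> R) : R :=
  fold_right (fun k acc => f k + acc) 0 (seq 1 g).

Definition theta (g k : nat) : R := INR k * PI / INR g - PI / 2.
Definition alpha (g k : nat) : vec := (cos (theta g k), sin (theta g k)).

Definition mult (m1 m2 k : nat) : R := if Nat.odd k then INR m1 else INR m2.

Definition inChamber (g : nat) (x : vec) : Prop :=
  exists r th, 0 < r /\ 0 < th < PI / INR g /\ x = (r * cos th, r * sin th).

(* Euclidean principal curvature of M_x at x on E_k in normal direction xi: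
   A_xi|E_k = < xi, - alpha_k / <x, alpha_k> > Id *)
Definition kappaE (g k : nat) (xi x : vec) : R :=
  - inner xi (alpha g k) / inner x (alpha g k).

(* Euclidean mean curvature vector H^E(x) = sum_k m_k (- alpha_k / <x,alpha_k>)
   (trace of the second fundamental form, i.e. <H^E, xi> = tr A_xi). *)
Definition HE (g m1 m2 : nat) (x : vec) : vec :=
  (sumk g (fun k => mult m1 m2 k * (- fst (alpha g k) / inner x (alpha g k))),
   sumk g (fun k => mult m1 m2 k * (- snd (alpha g k) / inner x (alpha g k)))).

(* Mean curvature vector of M_x as a hypersurface of S^{n+1}(|x|):
   the component of H^E tangent to the sphere (orthogonal to x). *)
Definition HS (g m1 m2 : nat) (x : vec) : vec :=
  let h := HE g m1 m2 x in
  let c := inner h x / inner x x in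
  (fst h - c * fst x, snd h - c * snd x).

(* unit normal of M_x in S^{n+1}(|x|) at x: unit vector of the normal plane
   orthogonal to x *)
Definition nuS (x : vec) : vec := (- snd x / vnorm x, fst x / vnorm x).

(* ||A^S(x)||^2 : squared Hilbert-Schmidt norm of the spherical shape
   operator A^S = A^E_{nuS x}, which is m_k kappa_k Id on E_k (dim m_k). *)
Definition normAS2 (g m1 m2 : nat) (x : vec) : R :=
  sumk g (fun k => mult m1 m2 k * (kappaE g k (nuS x) x) ^ 2).

Definition HS2 (g m1 m2 : nat) (x : vec) : R := inner (HS g m1 m2 x) (HS g m1 m2 x).

Definition isSphericalMCF (g m1 m2 : nat) (y : R -> vec) : Prop :=
  forall t, t <= 0 ->
    inChamber g (y t) /\ vnorm (y t) = 1 /\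
    derivable_pt_lim (fun s => fst (y s)) t (fst (HS g m1 m2 (y t))) /\
    derivable_pt_lim (fun s => snd (y s)) t (snd (HS g m1 m2 (y t))).

(* Main.v *)
Require Import Defs.
From Stdlib Require Import Reals Lra Lia List Nsatz.
Open Scope R_scope.

Definition nu (x : vec) : vec := (- snd x, fst x).
Definition Hsc (g m1 m2 : nat) (x : vec) : R := inner (HE g m1 m2 x) (nu x).
Definition cmul (a b : vec) : vec :=
  (fst a * fst b - snd a * snd b, fst a * snd b + snd a * fst b).
Fixpoint zpow (x : vec) (k : nat) : vec :=
  match k with O => (1, 0) | S k => cmul (zpow x k) x end.

Definition lsum (l : list nat) (f : nat -> R) := fold_right (fun k acc => f k + acc) 0 l.

Lemma lsum_plus l f h : lsum l f + lsum l h = lsum l (fun k => f k + h k).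
Proof. induction l; simpl; [ring| rewrite <- IHl; ring]. Qed.
Lemma lsum_scal l c f : c * lsum l f = lsum l (fun k => c * f k).
Proof. induction l; simpl; [ring| rewrite <- IHl; ring]. Qed.
Lemma lsum_ext l f h : (forall k, In k l -> f k = h k) -> lsum l f = lsum l h.
Proof. induction l; simpl; intros H; auto. rewrite H, IHl; auto. Qed.
Lemma lsum_le l f h : (forall k, In k l -> f k <= h k) -> lsum l f <= lsum l h.
Proof. induction l; simpl; intros H; [lra|]. apply Rplus_le_compat; auto. Qed.
Lemma lsum_const l c : lsum l (fun _ => c) = INR (length l) * c.
Proof. induction l; simpl length; rewrite ?S_INR; simpl; [ring| rewrite IHl; ring]. Qed.
Lemma lsum_nonneg l f : (forall k, In k l -> 0 <= f k) -> 0 <= lsum l f.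
Proof. induction l; simpl; intros H; [lra|]. apply Rplus_le_le_0_compat; auto. Qed.
Lemma sumk_lsum g f : sumk g f = lsum (seq 1 g) f.
Proof. reflexivity. Qed.

Lemma Hsc_sum g m1 m2 x : Hsc g m1 m2 x =
  sumk g (fun k => mult m1 m2 k * (snd x * fst (alpha g k) - fst x * snd (alpha g k))
                    / inner x (alpha g k)).
Proof.
  unfold Hsc, HE, inner at 1, nu; simpl fst; simpl snd. rewrite !sumk_lsum.
  rewrite Rmult_comm, lsum_scal, Rmult_comm, lsum_scal, lsum_plus.
  apply lsum_ext; intros; unfold Rdiv; ring.
Qed.

Lemma polar g x : inChamber g x -> vnorm x = 1 ->
  exists th, 0 < th < PI / INR g /\ x = (cos th, sin th).
Proof.
  intros [r [th [Hr [Hth ->]]]] Hn. exists th; split; auto.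
  unfold vnorm, inner in Hn; simpl in Hn.
  replace (r * cos th * (r * cos th) + r * sin th * (r * sin th)) with (r * r) in Hn.
  2:{ pose proof (sin2_cos2 th) as E; unfold Rsqr in E; nsatz. }
  rewrite sqrt_square in Hn by lra. subst r. f_equal; ring.
Qed.

Lemma zpow_polar th k : zpow (cos th, sin th) k = (cos (INR k * th), sin (INR k * th)).
Proof.
  induction k.
  - simpl. rewrite Rmult_0_l, cos_0, sin_0; reflexivity.
  - simpl zpow. rewrite IHk. unfold cmul; simpl fst; simpl snd.
    rewrite S_INR. replace ((INR k + 1) * th) with (INR k * th + th) by ring.
    rewrite cos_plus, sin_plus. f_equal; ring.
Qed.

Lemma inner_alpha g k th : inner (cos th, sin th) (alpha g k) = sin (INR k * PI / INR g - th).
Proof.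
  unfold inner, alpha, theta; simpl.
  set (a := INR k * PI / INR g).
  replace (a - PI/2) with (- (PI/2 - a)) by ring. rewrite cos_neg, sin_neg, cos_shift, sin_shift.
  rewrite sin_minus; ring.
Qed.

Lemma innernu_alpha g k th : inner (nu (cos th, sin th)) (alpha g k) = - cos (INR k * PI / INR g - th).
Proof.
  unfold inner, nu, alpha, theta; simpl.
  set (a := INR k * PI / INR g).
  replace (a - PI/2) with (- (PI/2 - a)) by ring. rewrite cos_neg, sin_neg, cos_shift, sin_shift.
  rewrite cos_minus; ring.
Qed.

Lemma ak_range g k th : (1 <= k <= g)%nat -> 0 < th < PI / INR g ->
  0 < INR k * PI / INR g - th < PI.
Proof.
  intros Hk Hth. assert (Hg : 0 < INR g) by (apply lt_0_INR; lia).
  assert (H1 : 1 <= INR k) by (apply (le_INR 1); lia).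
  assert (H2 : INR k <= INR g) by (apply le_INR; lia).
  assert (PI / INR g <= INR k * PI / INR g).
  { unfold Rdiv. rewrite <- (Rmult_1_l (PI * / INR g)) at 1. rewrite Rmult_assoc.
    apply Rmult_le_compat_r; [|lra]. apply Rmult_le_pos; [left; apply PI_RGT_0| left; apply Rinv_0_lt_compat; lra]. }
  assert (INR k * PI / INR g <= PI).
  { apply (Rmult_le_reg_r (INR g)); auto. field_simplify; [|lra].
    rewrite Rmult_comm. apply Rmult_le_compat_l; [left; apply PI_RGT_0|lra]. }
  lra.
Qed.

Lemma p_pos g k th : (1 <= k <= g)%nat -> 0 < th < PI / INR g ->
  0 < inner (cos th, sin th) (alpha g k).
Proof. intros. rewrite inner_alpha. apply sin_gt_0; apply ak_range; auto. Qed.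

Lemma Im_pos g th : (1 <= g)%nat -> 0 < th < PI / INR g -> 0 < sin (INR g * th).
Proof.
  intros Hg Hth. assert (0 < INR g) by (apply lt_0_INR; lia). apply sin_gt_0.
  - apply Rmult_lt_0_compat; lra.
  - destruct Hth as [_ H2]. apply (Rmult_lt_compat_l (INR g)) in H2; auto.
    replace (INR g * (PI / INR g)) with PI in H2 by (field; lra). lra.
Qed.

Lemma th_val g k b : theta g k = b -> alpha g k = (cos b, sin b).
Proof. unfold alpha; intros ->; reflexivity. Qed.

Ltac thv b := rewrite (th_val _ _ b); [| unfold theta; simpl; field].

Lemma a11 : alpha 1 1 = (0, 1).
Proof. thv (PI/2). rewrite cos_PI2, sin_PI2. f_equal; try (unfold Rdiv; ring); try field; try reflexivity. Qed.

Lemma case1 m1 m2 x1 x2 e N : (m1 = m2)%nat -> 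
  2 * N = INR 1 * (INR m1 + INR m2) ->
  x1*x1+x2*x2 = 1 -> e * (INR m1 + INR m2) = INR m2 - INR m1 ->
  (forall k, (1 <= k <= 1)%nat -> inner (x1,x2) (alpha 1 k) <> 0) ->
  - INR 1 * sumk 1 (fun k => mult m1 m2 k * (snd (x1,x2) * fst (alpha 1 k) - fst (x1,x2) * snd (alpha 1 k))
        * (snd (zpow (x1,x2) 1) * / inner (x1,x2) (alpha 1 k)))
  = INR 1 * N * (fst (zpow (x1,x2) 1) + e).
Proof.
  intros <-.
  intros HN Hx He Hp.
  pose proof (Hp 1%nat ltac:(lia)) as P1.
  clear Hp.
  rewrite sumk_lsum. cbn [seq lsum fold_right mult Nat.odd Nat.even negb].
  rewrite a11 in *.
  assert (Hs : sqrt 3 * sqrt 3 = 3) by (apply sqrt_sqrt; lra).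
  assert (Hr : 2 * (/ sqrt 2 * / sqrt 2) = 1).
  { rewrite <- Rinv_mult, sqrt_sqrt by lra. field. }
  assert (Hh : 2 * /2 = 1) by field.
  set (s := sqrt 3) in *. set (r := / sqrt 2) in *. set (h := /2) in *.
  set (M1 := INR m1) in *. try set (M2 := INR m2) in *.
  set (I := snd (zpow (x1, x2) 1)).
  unfold inner in *; cbn [fst snd] in *.
  assert (EI : I = 1 * ((x1 * (0) + x2 * (1)))).
  { unfold I; cbn [zpow cmul fst snd]. clearbody s r h. nsatz. }
  try assert (X1 : x1 <> 0) by (intro Hc; apply P1; rewrite Hc; ring).
  assert (X2 : x2 <> 0) by (intro Hc; apply P1; rewrite Hc; ring).
  rewrite EI. field_simplify; [| repeat split; auto].
  replace (INR 1) with 1 in * by (simpl; ring). cbn [zpow cmul fst snd]. clear EI I. cbn [pow].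
  clearbody s r h M1; try clearbody M2. nsatz.
Qed.

Lemma a21 : alpha 2 1 = (1, 0).
Proof. thv (0). rewrite cos_0, sin_0. f_equal; try (unfold Rdiv; ring); try field; try reflexivity. Qed.
Lemma a22 : alpha 2 2 = (0, 1).
Proof. thv (PI/2). rewrite cos_PI2, sin_PI2. f_equal; try (unfold Rdiv; ring); try field; try reflexivity. Qed.

Lemma case2 m1 m2 x1 x2 e N : 
  2 * N = INR 2 * (INR m1 + INR m2) ->
  x1*x1+x2*x2 = 1 -> e * (INR m1 + INR m2) = INR m2 - INR m1 ->
  (forall k, (1 <= k <= 2)%nat -> inner (x1,x2) (alpha 2 k) <> 0) ->
  - INR 2 * sumk 2 (fun k => mult m1 m2 k * (snd (x1,x2) * fst (alpha 2 k) - fst (x1,x2) * snd (alpha 2 k))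
        * (snd (zpow (x1,x2) 2) * / inner (x1,x2) (alpha 2 k)))
  = INR 2 * N * (fst (zpow (x1,x2) 2) + e).
Proof.

  intros HN Hx He Hp.
  pose proof (Hp 1%nat ltac:(lia)) as P1.
  pose proof (Hp 2%nat ltac:(lia)) as P2.
  clear Hp.
  rewrite sumk_lsum. cbn [seq lsum fold_right mult Nat.odd Nat.even negb].
  rewrite a21, a22 in *.
  assert (Hs : sqrt 3 * sqrt 3 = 3) by (apply sqrt_sqrt; lra).
  assert (Hr : 2 * (/ sqrt 2 * / sqrt 2) = 1).
  { rewrite <- Rinv_mult, sqrt_sqrt by lra. field. }
  assert (Hh : 2 * /2 = 1) by field.
  set (s := sqrt 3) in *. set (r := / sqrt 2) in *. set (h := /2) in *.
  set (M1 := INR m1) in *. try set (M2 := INR m2) in *.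
  set (I := snd (zpow (x1, x2) 2)).
  unfold inner in *; cbn [fst snd] in *.
  assert (EI : I = 2 * ((x1 * (1) + x2 * (0)) * (x1 * (0) + x2 * (1)))).
  { unfold I; cbn [zpow cmul fst snd]. clearbody s r h. nsatz. }
  try assert (X1 : x1 <> 0) by (intro Hc; apply P1; rewrite Hc; ring).
  assert (X2 : x2 <> 0) by (intro Hc; apply P2; rewrite Hc; ring).
  rewrite EI. field_simplify; [| repeat split; auto].
  replace (INR 2) with 2 in * by (simpl; ring). cbn [zpow cmul fst snd]. clear EI I. cbn [pow].
  clearbody s r h M1; try clearbody M2. nsatz.
Qed.

Lemma a31 : alpha 3 1 = (sqrt 3 * /2, - /2).
Proof. thv (-(PI/6)). rewrite cos_neg, sin_neg, cos_PI6, sin_PI6. f_equal; try (unfold Rdiv; ring); try field; try reflexivity. Qed.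
Lemma a32 : alpha 3 2 = (sqrt 3 * /2, /2).
Proof. thv (PI/6). rewrite cos_PI6, sin_PI6. f_equal; try (unfold Rdiv; ring); try field; try reflexivity. Qed.
Lemma a33 : alpha 3 3 = (0, 1).
Proof. thv (PI/2). rewrite cos_PI2, sin_PI2. f_equal; try (unfold Rdiv; ring); try field; try reflexivity. Qed.

Lemma case3 m1 m2 x1 x2 e N : (m1 = m2)%nat -> 
  2 * N = INR 3 * (INR m1 + INR m2) ->
  x1*x1+x2*x2 = 1 -> e * (INR m1 + INR m2) = INR m2 - INR m1 ->
  (forall k, (1 <= k <= 3)%nat -> inner (x1,x2) (alpha 3 k) <> 0) ->
  - INR 3 * sumk 3 (fun k => mult m1 m2 k * (snd (x1,x2) * fst (alpha 3 k) - fst (x1,x2) * snd (alpha 3 k))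
        * (snd (zpow (x1,x2) 3) * / inner (x1,x2) (alpha 3 k)))
  = INR 3 * N * (fst (zpow (x1,x2) 3) + e).
Proof.
  intros <-.
  intros HN Hx He Hp.
  pose proof (Hp 1%nat ltac:(lia)) as P1.
  pose proof (Hp 2%nat ltac:(lia)) as P2.
  pose proof (Hp 3%nat ltac:(lia)) as P3.
  clear Hp.
  rewrite sumk_lsum. cbn [seq lsum fold_right mult Nat.odd Nat.even negb].
  rewrite a31, a32, a33 in *.
  assert (Hs : sqrt 3 * sqrt 3 = 3) by (apply sqrt_sqrt; lra).
  assert (Hr : 2 * (/ sqrt 2 * / sqrt 2) = 1).
  { rewrite <- Rinv_mult, sqrt_sqrt by lra. field. }
  assert (Hh : 2 * /2 = 1) by field.
  set (s := sqrt 3) in *. set (r := / sqrt 2) in *. set (h := /2) in *.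
  set (M1 := INR m1) in *. try set (M2 := INR m2) in *.
  set (I := snd (zpow (x1, x2) 3)).
  unfold inner in *; cbn [fst snd] in *.
  assert (EI : I = 4 * ((x1 * (s * h) + x2 * (- h)) * (x1 * (s * h) + x2 * (h)) * (x1 * (0) + x2 * (1)))).
  { unfold I; cbn [zpow cmul fst snd]. clearbody s r h. nsatz. }
  try assert (X1 : x1 <> 0) by (intro Hc; apply P1; rewrite Hc; ring).
  assert (X2 : x2 <> 0) by (intro Hc; apply P3; rewrite Hc; ring).
  rewrite EI. field_simplify; [| repeat split; auto].
  replace (INR 3) with 3 in * by (simpl; ring). cbn [zpow cmul fst snd]. clear EI I. cbn [pow].
  clearbody s r h M1; try clearbody M2. nsatz.
Qed.

Lemma a41 : alpha 4 1 = (/ sqrt 2, - / sqrt 2).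
Proof. thv (-(PI/4)). rewrite cos_neg, sin_neg, cos_PI4, sin_PI4. f_equal; try (unfold Rdiv; ring); try field; try reflexivity. Qed.
Lemma a42 : alpha 4 2 = (1, 0).
Proof. thv (0). rewrite cos_0, sin_0. f_equal; try (unfold Rdiv; ring); try field; try reflexivity. Qed.
Lemma a43 : alpha 4 3 = (/ sqrt 2, / sqrt 2).
Proof. thv (PI/4). rewrite cos_PI4, sin_PI4. f_equal; try (unfold Rdiv; ring); try field; try reflexivity. Qed.
Lemma a44 : alpha 4 4 = (0, 1).
Proof. thv (PI/2). rewrite cos_PI2, sin_PI2. f_equal; try (unfold Rdiv; ring); try field; try reflexivity. Qed.

Lemma case4 m1 m2 x1 x2 e N : 
  2 * N = INR 4 * (INR m1 + INR m2) ->
  x1*x1+x2*x2 = 1 -> e * (INR m1 + INR m2) = INR m2 - INR m1 ->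
  (forall k, (1 <= k <= 4)%nat -> inner (x1,x2) (alpha 4 k) <> 0) ->
  - INR 4 * sumk 4 (fun k => mult m1 m2 k * (snd (x1,x2) * fst (alpha 4 k) - fst (x1,x2) * snd (alpha 4 k))
        * (snd (zpow (x1,x2) 4) * / inner (x1,x2) (alpha 4 k)))
  = INR 4 * N * (fst (zpow (x1,x2) 4) + e).
Proof.

  intros HN Hx He Hp.
  pose proof (Hp 1%nat ltac:(lia)) as P1.
  pose proof (Hp 2%nat ltac:(lia)) as P2.
  pose proof (Hp 3%nat ltac:(lia)) as P3.
  pose proof (Hp 4%nat ltac:(lia)) as P4.
  clear Hp.
  rewrite sumk_lsum. cbn [seq lsum fold_right mult Nat.odd Nat.even negb].
  rewrite a41, a42, a43, a44 in *.
  assert (Hs : sqrt 3 * sqrt 3 = 3) by (apply sqrt_sqrt; lra).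
  assert (Hr : 2 * (/ sqrt 2 * / sqrt 2) = 1).
  { rewrite <- Rinv_mult, sqrt_sqrt by lra. field. }
  assert (Hh : 2 * /2 = 1) by field.
  set (s := sqrt 3) in *. set (r := / sqrt 2) in *. set (h := /2) in *.
  set (M1 := INR m1) in *. try set (M2 := INR m2) in *.
  set (I := snd (zpow (x1, x2) 4)).
  unfold inner in *; cbn [fst snd] in *.
  assert (EI : I = 8 * ((x1 * (r) + x2 * (- r)) * (x1 * (1) + x2 * (0)) * (x1 * (r) + x2 * (r)) * (x1 * (0) + x2 * (1)))).
  { unfold I; cbn [zpow cmul fst snd]. clearbody s r h. nsatz. }
  try assert (X1 : x1 <> 0) by (intro Hc; apply P2; rewrite Hc; ring).
  assert (X2 : x2 <> 0) by (intro Hc; apply P4; rewrite Hc; ring).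
  rewrite EI. field_simplify; [| repeat split; auto].
  replace (INR 4) with 4 in * by (simpl; ring). cbn [zpow cmul fst snd]. clear EI I. cbn [pow].
  clearbody s r h M1; try clearbody M2. nsatz.
Qed.

Lemma a61 : alpha 6 1 = (/2, - (sqrt 3 * /2)).
Proof. thv (-(PI/3)). rewrite cos_neg, sin_neg, cos_PI3, sin_PI3. f_equal; try (unfold Rdiv; ring); try field; try reflexivity. Qed.
Lemma a62 : alpha 6 2 = (sqrt 3 * /2, - /2).
Proof. thv (-(PI/6)). rewrite cos_neg, sin_neg, cos_PI6, sin_PI6. f_equal; try (unfold Rdiv; ring); try field; try reflexivity. Qed.
Lemma a63 : alpha 6 3 = (1, 0).
Proof. thv (0). rewrite cos_0, sin_0. f_equal; try (unfold Rdiv; ring); try field; try reflexivity. Qed.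
Lemma a64 : alpha 6 4 = (sqrt 3 * /2, /2).
Proof. thv (PI/6). rewrite cos_PI6, sin_PI6. f_equal; try (unfold Rdiv; ring); try field; try reflexivity. Qed.
Lemma a65 : alpha 6 5 = (/2, sqrt 3 * /2).
Proof. thv (PI/3). rewrite cos_PI3, sin_PI3. f_equal; try (unfold Rdiv; ring); try field; try reflexivity. Qed.
Lemma a66 : alpha 6 6 = (0, 1).
Proof. thv (PI/2). rewrite cos_PI2, sin_PI2. f_equal; try (unfold Rdiv; ring); try field; try reflexivity. Qed.

Lemma case6 m1 m2 x1 x2 e N : 
  2 * N = INR 6 * (INR m1 + INR m2) ->
  x1*x1+x2*x2 = 1 -> e * (INR m1 + INR m2) = INR m2 - INR m1 ->
  (forall k, (1 <= k <= 6)%nat -> inner (x1,x2) (alpha 6 k) <> 0) ->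
  - INR 6 * sumk 6 (fun k => mult m1 m2 k * (snd (x1,x2) * fst (alpha 6 k) - fst (x1,x2) * snd (alpha 6 k))
        * (snd (zpow (x1,x2) 6) * / inner (x1,x2) (alpha 6 k)))
  = INR 6 * N * (fst (zpow (x1,x2) 6) + e).
Proof.

  intros HN Hx He Hp.
  pose proof (Hp 1%nat ltac:(lia)) as P1.
  pose proof (Hp 2%nat ltac:(lia)) as P2.
  pose proof (Hp 3%nat ltac:(lia)) as P3.
  pose proof (Hp 4%nat ltac:(lia)) as P4.
  pose proof (Hp 5%nat ltac:(lia)) as P5.
  pose proof (Hp 6%nat ltac:(lia)) as P6.
  clear Hp.
  rewrite sumk_lsum. cbn [seq lsum fold_right mult Nat.odd Nat.even negb].
  rewrite a61, a62, a63, a64, a65, a66 in *.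
  assert (Hs : sqrt 3 * sqrt 3 = 3) by (apply sqrt_sqrt; lra).
  assert (Hr : 2 * (/ sqrt 2 * / sqrt 2) = 1).
  { rewrite <- Rinv_mult, sqrt_sqrt by lra. field. }
  assert (Hh : 2 * /2 = 1) by field.
  set (s := sqrt 3) in *. set (r := / sqrt 2) in *. set (h := /2) in *.
  set (M1 := INR m1) in *. try set (M2 := INR m2) in *.
  set (I := snd (zpow (x1, x2) 6)).
  unfold inner in *; cbn [fst snd] in *.
  assert (EI : I = 32 * ((x1 * (h) + x2 * (- (s * h))) * (x1 * (s * h) + x2 * (- h)) * (x1 * (1) + x2 * (0)) * (x1 * (s * h) + x2 * (h)) * (x1 * (h) + x2 * (s * h)) * (x1 * (0) + x2 * (1)))).
  { unfold I; cbn [zpow cmul fst snd]. clearbody s r h. nsatz. }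
  try assert (X1 : x1 <> 0) by (intro Hc; apply P3; rewrite Hc; ring).
  assert (X2 : x2 <> 0) by (intro Hc; apply P6; rewrite Hc; ring).
  rewrite EI. field_simplify; [| repeat split; auto].
  replace (INR 6) with 6 in * by (simpl; ring). cbn [zpow cmul fst snd]. clear EI I. cbn [pow].
  clearbody s r h M1; try clearbody M2. nsatz.
Qed.

Lemma inner_one x : vnorm x = 1 -> inner x x = 1.
Proof.
  unfold vnorm; intros H. assert (0 <= inner x x) by (unfold inner; nra).
  rewrite <- (sqrt_sqrt (inner x x)) by auto. rewrite H; ring.
Qed.

Lemma HS_eq g m1 m2 x : vnorm x = 1 ->
  HS g m1 m2 x = (Hsc g m1 m2 x * - snd x, Hsc g m1 m2 x * fst x).
Proof.
  intros Hn. pose proof (inner_one x Hn) as Hi.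
  unfold HS, Hsc. destruct (HE g m1 m2 x) as [h1 h2]. destruct x as [x1 x2].
  unfold inner, nu in *; cbn [fst snd] in *. rewrite Hi.
  replace ((h1 * x1 + h2 * x2) / 1) with (h1 * x1 + h2 * x2) by field.
  f_equal; nsatz.
Qed.

Lemma HS2_eq g m1 m2 x : vnorm x = 1 -> HS2 g m1 m2 x = (Hsc g m1 m2 x)^2.
Proof.
  intros Hn. pose proof (inner_one x Hn) as Hi. unfold HS2. rewrite HS_eq by auto.
  destruct x as [x1 x2]. unfold inner in *; cbn [fst snd pow] in *. nsatz.
Qed.

Lemma nuS_eq x : vnorm x = 1 -> nuS x = nu x.
Proof. intros H. unfold nuS, nu. rewrite H. f_equal; field. Qed.

Lemma dmult f h x a b : derivable_pt_lim f x a -> derivable_pt_lim h x b ->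
  derivable_pt_lim (fun s => f s * h s) x (a * h x + f x * b).
Proof. intros; apply (derivable_pt_lim_mult f h); auto. Qed.
Lemma dplus f h x a b : derivable_pt_lim f x a -> derivable_pt_lim h x b ->
  derivable_pt_lim (fun s => f s + h s) x (a + b).
Proof. intros; apply (derivable_pt_lim_plus f h); auto. Qed.
Lemma dminus f h x a b : derivable_pt_lim f x a -> derivable_pt_lim h x b ->
  derivable_pt_lim (fun s => f s - h s) x (a - b).
Proof. intros; apply (derivable_pt_lim_minus f h); auto. Qed.
Lemma dval f x a b : derivable_pt_lim f x a -> a = b -> derivable_pt_lim f x b.
Proof. intros H ->; exact H. Qed.

Fixpoint Dz (x d : vec) (k : nat) : vec :=
  match k with
  | O => (0, 0)
  | S k => let D := Dz x d k in let z := zpow x k in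
     ((fst D * fst x + fst z * fst d) - (snd D * snd x + snd z * snd d),
      (fst D * snd x + fst z * snd d) + (snd D * fst x + snd z * fst d))
  end.

Lemma zpow_deriv (y : R -> vec) t d1 d2 :
  derivable_pt_lim (fun s => fst (y s)) t d1 -> derivable_pt_lim (fun s => snd (y s)) t d2 ->
  forall k, derivable_pt_lim (fun s => fst (zpow (y s) k)) t (fst (Dz (y t) (d1, d2) k)) /\
            derivable_pt_lim (fun s => snd (zpow (y s) k)) t (snd (Dz (y t) (d1, d2) k)).
Proof.
  intros H1 H2 k. induction k as [|k [IH1 IH2]].
  - split; simpl; apply derivable_pt_lim_const.
  - split.
    + change (derivable_pt_lim (fun s => fst (zpow (y s) k) * fst (y s) - snd (zpow (y s) k) * snd (y s)) t
        ((fst (Dz (y t) (d1, d2) k) * fst (y t) + fst (zpow (y t) k) * d1) -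
         (snd (Dz (y t) (d1, d2) k) * snd (y t) + snd (zpow (y t) k) * d2))).
      apply dminus; apply dmult; auto.
    + change (derivable_pt_lim (fun s => fst (zpow (y s) k) * snd (y s) + snd (zpow (y s) k) * fst (y s)) t
        ((fst (Dz (y t) (d1, d2) k) * snd (y t) + fst (zpow (y t) k) * d2) +
         (snd (Dz (y t) (d1, d2) k) * fst (y t) + snd (zpow (y t) k) * d1))).
      apply dplus; apply dmult; auto.
Qed.

Lemma Dz_rot x H k : Dz x (H * - snd x, H * fst x) k =
  (INR k * H * - snd (zpow x k), INR k * H * fst (zpow x k)).
Proof.
  induction k.
  - simpl. f_equal; ring.
  - cbn [Dz]. rewrite IHk. cbn [zpow cmul fst snd]. rewrite S_INR.
    destruct (zpow x k) as [a b]. destruct x as [x1 x2]. cbn [fst snd]. apply pair_equal_spec; split; ring.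
Qed.

Lemma ode (u : R -> R) c : (forall t, t <= 0 -> derivable_pt_lim u t (c * u t)) ->
  forall t, t <= 0 -> u t = u 0 * exp (c * t).
Proof.
  intros H t Ht. destruct (Req_dec t 0) as [->|Hne].
  { rewrite Rmult_0_r, exp_0; ring. }
  set (w := fun s => u s * exp (- c * s)).
  assert (Dw : forall s, t <= s <= 0 -> derivable_pt_lim w s 0).
  { intros s Hs. unfold w.
    assert (DE : derivable_pt_lim (fun s => exp (- c * s)) s (exp (- c * s) * (- c))).
    { apply (derivable_pt_lim_comp (fun s => - c * s) exp s (- c) (exp (- c * s))).
      + eapply dval. apply (dmult (fun _ => -c) (fun s => s)).
        apply derivable_pt_lim_const. apply derivable_pt_lim_id. ring.
      + apply derivable_pt_lim_exp. }
    eapply dval. apply dmult. apply H; lra. exact DE. cbv beta; ring. }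
  destruct (MVT_cor2 w (fun _ => 0) t 0) as [z [Hz _]]; [lra| exact Dw |].
  assert (w t = u 0).
  { unfold w in Hz |- *. rewrite Rmult_0_r, exp_0 in Hz. lra. }
  unfold w in H0. rewrite <- H0, Rmult_assoc, <- exp_plus.
  replace (- c * t + c * t) with 0 by ring. rewrite exp_0; ring.
Qed.

Definition delta (m1 m2 : nat) : R := (INR m2 - INR m1) / (INR m1 + INR m2).

Lemma key g m1 m2 n x :
  (g = 1 \/ g = 2 \/ g = 3 \/ g = 4 \/ g = 6)%nat ->
  (1 <= m1)%nat -> (Nat.odd g = true -> m1 = m2) -> ((m1 + m2) * g = 2 * n)%nat ->
  inChamber g x -> vnorm x = 1 ->
  - INR g * Hsc g m1 m2 x * snd (zpow x g) = INR g * INR n * (fst (zpow x g) + delta m1 m2).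
Proof.
  intros Hg Hm1 Hodd Hn Hc Hv.
  destruct (polar g x Hc Hv) as [th [Hth ->]].
  rewrite Hsc_sum.
  replace (- INR g * sumk g _ * snd (zpow (cos th, sin th) g)) with
    (- INR g * sumk g (fun k => mult m1 m2 k * (snd (cos th, sin th) * fst (alpha g k) - fst (cos th, sin th) * snd (alpha g k))
        * (snd (zpow (cos th, sin th) g) * / inner (cos th, sin th) (alpha g k)))).
  2:{ rewrite !sumk_lsum. rewrite Rmult_assoc. f_equal.
      rewrite Rmult_comm, lsum_scal. apply lsum_ext; intros; unfold Rdiv; ring. }
  assert (HN : 2 * INR n = INR g * (INR m1 + INR m2)).
  { apply (f_equal INR) in Hn. rewrite mult_INR, plus_INR, mult_INR in Hn. simpl (INR 2) in Hn. lra. }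
  assert (Hx : cos th * cos th + sin th * sin th = 1).
  { pose proof (sin2_cos2 th). unfold Rsqr in *. lra. }
  assert (M1p : 1 <= INR m1) by (apply (le_INR 1); lia).
  assert (M2p : 0 <= INR m2) by apply pos_INR.
  assert (He : delta m1 m2 * (INR m1 + INR m2) = INR m2 - INR m1).
  { unfold delta; field; lra. }
  assert (Hp : forall k, (1 <= k <= g)%nat -> inner (cos th, sin th) (alpha g k) <> 0).
  { intros k Hk. apply Rgt_not_eq. apply p_pos; auto. }
  destruct Hg as [->|[->|[->|[->| ->]]]].
  - apply case1; auto.
  - apply case2; auto.
  - apply case3; auto.
  - apply case4; auto.
  - apply case6; auto.
Qed.

Definition Ak (g k : nat) : R := INR k * PI / INR g.

Lemma vnorm_polar th : vnorm (cos th, sin th) = 1.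
Proof.
  unfold vnorm, inner; simpl. pose proof (sin2_cos2 th). unfold Rsqr in H.
  replace (cos th * cos th + sin th * sin th) with 1 by lra. apply sqrt_1.
Qed.

Lemma normAS2_trig g m1 m2 th : normAS2 g m1 m2 (cos th, sin th) =
  sumk g (fun k => mult m1 m2 k * (cos (Ak g k - th) / sin (Ak g k - th)) ^ 2).
Proof.
  unfold normAS2. rewrite !sumk_lsum. apply lsum_ext; intros k _.
  unfold kappaE. rewrite nuS_eq by apply vnorm_polar.
  rewrite innernu_alpha, inner_alpha. unfold Ak, Rdiv. f_equal. f_equal. ring.
Qed.

Lemma sin_kPI z k : Rabs (sin (z + INR k * PI)) = Rabs (sin z).
Proof.
  induction k.
  - simpl. rewrite Rmult_0_l, Rplus_0_r. reflexivity.
  - rewrite S_INR. replace (z + (INR k + 1) * PI) with ((z + INR k * PI) + PI) by ring.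
    rewrite neg_sin, Rabs_Ropp. exact IHk.
Qed.

Lemma sin_mult_le k z : Rabs (sin (INR k * z)) <= INR k * Rabs (sin z).
Proof.
  induction k.
  - simpl. rewrite Rmult_0_l, sin_0, Rabs_R0. lra.
  - rewrite S_INR. replace ((INR k + 1) * z) with (INR k * z + z) by ring.
    rewrite sin_plus.
    pose proof (Rabs_triang (sin (INR k * z) * cos z) (cos (INR k * z) * sin z)).
    rewrite !Rabs_mult in H.
    assert (Rabs (cos z) <= 1) by (apply Rabs_le; apply COS_bound).
    assert (Rabs (cos (INR k * z)) <= 1) by (apply Rabs_le; apply COS_bound).
    pose proof (Rabs_pos (sin (INR k * z))). pose proof (Rabs_pos (sin z)).
    nra.
Qed.

Lemma term_bound g k th : (1 <= k <= g)%nat -> 0 < th < PI / INR g ->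
  (cos (Ak g k - th) / sin (Ak g k - th)) ^ 2 * sin (INR g * th) ^ 2 <= INR g ^ 2.
Proof.
  intros Hk Hth.
  pose proof (ak_range g k th Hk Hth) as Hr. fold (Ak g k) in Hr.
  assert (HS : 0 < sin (Ak g k - th)) by (apply sin_gt_0; lra).
  assert (Hg : 0 < INR g) by (apply lt_0_INR; lia).
  assert (EQ : INR g * th = INR g * (- (Ak g k - th)) + INR k * PI).
  { unfold Ak. field. lra. }
  assert (HQ : Rabs (sin (INR g * th)) <= INR g * sin (Ak g k - th)).
  { rewrite EQ, sin_kPI. eapply Rle_trans. apply sin_mult_le.
    rewrite sin_neg, Rabs_Ropp, Rabs_right by lra. lra. }
  set (Q := sin (INR g * th)) in *. set (S := sin (Ak g k - th)) in *.
  set (c := cos (Ak g k - th)).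
  assert (Hc : c * c <= 1) by (pose proof (COS_bound (Ak g k - th)); unfold c; nra).
  assert (HQ2 : Q * Q <= INR g * INR g * (S * S)).
  { pose proof (Rabs_pos Q). pose proof (Rsqr_abs Q). unfold Rsqr in *. rewrite H0. nra. }
  replace ((c / S) ^ 2 * Q ^ 2) with ((c * c) * (Q * Q) / (S * S)) by (field; lra).
  apply (Rle_trans _ ((c * c) * (INR g * INR g * (S * S)) / (S * S))).
  - unfold Rdiv. apply Rmult_le_compat_r. left; apply Rinv_0_lt_compat; nra.
    apply Rmult_le_compat_l; nra.
  - replace (c * c * (INR g * INR g * (S * S)) / (S * S)) with (c * c * (INR g * INR g)) by (field; lra).
    simpl. nra.
Qed.

Lemma upper_bound g m1 m2 th : (1 <= g)%nat -> 0 < th < PI / INR g ->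
  normAS2 g m1 m2 (cos th, sin th) * sin (INR g * th) ^ 2 <= INR g * ((INR m1 + INR m2) * INR g ^ 2).
Proof.
  intros Hg Hth. rewrite normAS2_trig, sumk_lsum, Rmult_comm, lsum_scal.
  rewrite <- (length_seq g 1) at 2. rewrite <- lsum_const. apply lsum_le.
  intros k Hk. apply in_seq in Hk.
  pose proof (term_bound g k th ltac:(lia) Hth).
  assert (Hm : 0 <= mult m1 m2 k <= INR m1 + INR m2).
  { pose proof (pos_INR m1); pose proof (pos_INR m2). unfold mult; destruct (Nat.odd k); lra. }
  assert (0 <= (cos (Ak g k - th) / sin (Ak g k - th)) ^ 2 * sin (INR g * th) ^ 2) by
    (apply Rmult_le_pos; apply pow2_ge_0).
  assert (0 <= INR g ^ 2) by apply pow2_ge_0.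
  nra.
Qed.

Lemma lsum_app l1 l2 f : lsum (l1 ++ l2) f = lsum l1 f + lsum l2 f.
Proof. induction l1; simpl; [ring| rewrite IHl1; ring]. Qed.

Lemma cos2_sum a b : cos a ^ 2 + cos b ^ 2 = 1 + cos (a + b) * cos (a - b).
Proof.
  rewrite cos_plus, cos_minus. pose proof (sin2_cos2 a). pose proof (sin2_cos2 b).
  unfold Rsqr in *. cbn [pow]. nsatz.
Qed.

Lemma lower_bound g m1 m2 th : (2 <= g)%nat -> (1 <= m1)%nat -> (m1 <= m2)%nat ->
  0 < th < PI / INR g ->
  1 - cos (PI / INR g) <= normAS2 g m1 m2 (cos th, sin th).
Proof.
  intros Hg Hm1 Hm2 Hth. rewrite normAS2_trig, sumk_lsum.
  destruct g as [|[|g']]; [lia|lia|].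
  rewrite !seq_S, !lsum_app. cbn [lsum fold_right].
  assert (M1 : 1 <= INR m1) by (apply (le_INR 1); lia).
  assert (M2 : 1 <= INR m2) by (apply (le_INR 1); lia).
  assert (Hmult : forall k, 1 <= mult m1 m2 k) by (intros; unfold mult; destruct (Nat.odd k); lra).
  assert (Hterm : forall k, (1 <= k <= S (S g'))%nat ->
     cos (Ak (S (S g')) k - th) ^ 2 <= mult m1 m2 k * (cos (Ak (S (S g')) k - th) / sin (Ak (S (S g')) k - th)) ^ 2).
  { intros k Hk. pose proof (ak_range _ k th Hk Hth) as Hr. fold (Ak (S (S g')) k) in Hr.
    assert (HS : 0 < sin (Ak (S (S g')) k - th)) by (apply sin_gt_0; lra).
    pose proof (SIN_bound (Ak (S (S g')) k - th)).
    set (Sv := sin (Ak (S (S g')) k - th)) in *. set (c := cos (Ak (S (S g')) k - th)).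
    assert (c ^ 2 <= (c / Sv) ^ 2).
    { replace ((c / Sv) ^ 2) with (c ^ 2 / (Sv * Sv)) by (field; lra).
      apply (Rmult_le_reg_r (Sv * Sv)). nra. unfold Rdiv. rewrite Rmult_assoc, Rinv_l by nra.
      assert (0 <= c ^ 2) by apply pow2_ge_0. assert (Sv * Sv <= 1) by nra. apply Rmult_le_compat_l; lra. }
    specialize (Hmult k). assert (0 <= (c / Sv) ^ 2) by apply pow2_ge_0. nra. }
  assert (Hnn : 0 <= lsum (seq 1 g') (fun k => mult m1 m2 k *
      (cos (Ak (S (S g')) k - th) / sin (Ak (S (S g')) k - th)) ^ 2)).
  { apply lsum_nonneg. intros; apply Rmult_le_pos. pose proof (Hmult k); lra. apply pow2_ge_0. }
  pose proof (Hterm (1 + g')%nat ltac:(lia)). pose proof (Hterm (1 + S g')%nat ltac:(lia)).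
  set (G := INR (S (S g'))) in *.
  assert (HG : 2 <= G) by (unfold G; apply (le_INR 2); lia).
  assert (E1 : Ak (S (S g')) (1 + g') - th = - (th + PI / G) + PI).
  { unfold Ak. fold G. replace (INR (1 + g')) with (G - 1) by (unfold G; rewrite !S_INR; simpl; ring).
    field. lra. }
  assert (E2 : Ak (S (S g')) (1 + S g') - th = - th + PI).
  { unfold Ak. fold G. replace (INR (1 + S g')) with G by (unfold G; reflexivity). field. lra. }
  assert (C1 : cos (Ak (S (S g')) (1 + g') - th) ^ 2 = cos (th + PI / G) ^ 2) by (rewrite E1, neg_cos, cos_neg; ring).
  assert (C2 : cos (Ak (S (S g')) (1 + S g') - th) ^ 2 = cos th ^ 2) by (rewrite E2, neg_cos, cos_neg; ring).
  rewrite C1 in H. rewrite C2 in H0.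
  assert (cos th ^ 2 + cos (th + PI / G) ^ 2 >= 1 - cos (PI / G)).
  { rewrite (Rplus_comm (cos th ^ 2)), cos2_sum. replace (th + PI / G - th) with (PI / G) by ring.
    assert (0 <= cos (PI / G)).
    { apply cos_ge_0. assert (0 < PI / G) by (apply Rdiv_lt_0_compat; [apply PI_RGT_0|lra]). pose proof PI_RGT_0. lra.
      apply (Rmult_le_reg_r G); [lra|]. unfold Rdiv. rewrite Rmult_assoc, Rinv_l by lra. pose proof PI_RGT_0. nra. }
    pose proof (COS_bound (th + PI / G + th)). nra. }
  lra.
Qed.


Lemma cos_lt_1' d : 0 < d < PI -> cos d < 1.
Proof.
  intros Hd. replace d with (2 * (d / 2)) by field. rewrite cos_2a_sin.
  assert (0 < sin (d / 2)) by (apply sin_gt_0; lra). nra.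
Qed.

Lemma ratio_eq g m1 m2 n x u I : vnorm x = 1 -> 0 < INR g -> 0 < INR n -> I <> 0 -> u <> 0 ->
  - INR g * Hsc g m1 m2 x * I = INR g * INR n * u ->
  normAS2 g m1 m2 x / HS2 g m1 m2 x = normAS2 g m1 m2 x * I ^ 2 / (INR n ^ 2 * u ^ 2).
Proof.
  intros Hv Hg Hn HI Hu Hk. rewrite HS2_eq by auto.
  assert (E : Hsc g m1 m2 x = - (INR n * u) / I).
  { apply (Rmult_eq_reg_l (- INR g * I)). 2:{ apply Rmult_integral_contrapositive; split; lra. }
    field_simplify; auto. rewrite <- Hk. field. }
  rewrite E. field. repeat split; auto; lra.
Qed.

Lemma pow2_gt_0 x : x <> 0 -> 0 < x ^ 2.
Proof. intros H; simpl; rewrite Rmult_1_r. pose proof (Rsqr_pos_lt x H); unfold Rsqr in *; lra. Qed.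

Theorem corollary4p15 (g m1 m2 n : nat) (y : R -> vec) :
  (g = 1 \/ g = 2 \/ g = 3 \/ g = 4 \/ g = 6)%nat ->
  (1 <= m1)%nat -> (m1 <= m2)%nat ->
  (Nat.odd g = true -> m1 = m2) ->
  ((m1 + m2) * g = 2 * n)%nat ->
  isSphericalMCF g m1 m2 y ->
  HS g m1 m2 (y 0) <> (0, 0) ->
  ((g = 1)%nat ->
     forall t, t <= 0 -> normAS2 g m1 m2 (y t) / HS2 g m1 m2 (y t) = 1 / INR n) /\
  ((2 <= g)%nat ->
     exists t1 c1 c2, 0 < t1 /\ 0 < c1 /\ 0 < c2 /\
       forall t, t < - t1 ->
         c2 * exp (- 2 * INR g * INR n * t) <= normAS2 g m1 m2 (y t) / HS2 g m1 m2 (y t) /\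
         normAS2 g m1 m2 (y t) / HS2 g m1 m2 (y t) <= c1 * exp (- 2 * INR g * INR n * t)).
Proof.
  intros Hg Hm1 Hm12 Hodd Hn Hmcf H0.
  assert (Hg1 : (1 <= g)%nat) by lia.
  assert (Gp : 0 < INR g) by (apply lt_0_INR; lia).
  assert (HN : 2 * INR n = INR g * (INR m1 + INR m2)).
  { apply (f_equal INR) in Hn. rewrite mult_INR, plus_INR, mult_INR in Hn. simpl (INR 2) in Hn. lra. }
  assert (M1 : 1 <= INR m1) by (apply (le_INR 1); lia).
  assert (M12 : INR m1 <= INR m2) by (apply le_INR; lia).
  assert (Np : 0 < INR n) by nra.
  set (u := fun t => fst (zpow (y t) g) + delta m1 m2).
  assert (Du : forall t, t <= 0 -> derivable_pt_lim u t ((INR g * INR n) * u t)).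
  { intros t Ht. destruct (Hmcf t Ht) as [Hc [Hv [D1 D2]]].
    rewrite HS_eq in D1, D2 by auto. cbn [fst snd] in D1, D2.
    destruct (zpow_deriv y t _ _ D1 D2 g) as [Z1 _].
    rewrite Dz_rot in Z1. cbn [fst] in Z1.
    pose proof (key g m1 m2 n (y t) Hg Hm1 Hodd Hn Hc Hv) as K.
    unfold u. eapply dval. apply dplus. exact Z1. apply derivable_pt_lim_const.
    rewrite Rplus_0_r, <- K. ring. }
  pose proof (ode u _ Du) as Hu.
  set (U0 := u 0) in *.
  assert (Pol : forall t, t <= 0 -> exists th, 0 < th < PI / INR g /\ y t = (cos th, sin th)).
  { intros t Ht. destruct (Hmcf t Ht) as [Hc [Hv _]]. apply polar; auto. }
  assert (U0nz : U0 <> 0).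
  { intros HU. destruct (Hmcf 0 (Rle_refl 0)) as [Hc [Hv _]].
    pose proof (key g m1 m2 n (y 0) Hg Hm1 Hodd Hn Hc Hv) as K.
    fold (u 0) in K. fold U0 in K. rewrite HU, Rmult_0_r in K.
    destruct (Pol 0 (Rle_refl 0)) as [th [Hth Ey]].
    assert (HI : 0 < snd (zpow (y 0) g)).
    { rewrite Ey, zpow_polar. apply Im_pos; auto. }
    assert (Hsc g m1 m2 (y 0) = 0).
    { apply (Rmult_eq_reg_l (- INR g * snd (zpow (y 0) g))). transitivity (- INR g * Hsc g m1 m2 (y 0) * snd (zpow (y 0) g)); [ring| rewrite K; ring].
      apply Rmult_integral_contrapositive; split; lra. }
    apply H0. rewrite HS_eq by auto. rewrite H. f_equal; ring. }
  assert (Hunz : forall t, t <= 0 -> u t <> 0).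
  { intros t Ht. rewrite (Hu t Ht). apply Rmult_integral_contrapositive; split; auto.
    apply Rgt_not_eq, exp_pos. }
  assert (Ratio : forall t, t <= 0 -> forall th, 0 < th < PI / INR g -> y t = (cos th, sin th) ->
    normAS2 g m1 m2 (y t) / HS2 g m1 m2 (y t) =
    normAS2 g m1 m2 (cos th, sin th) * sin (INR g * th) ^ 2 / (INR n ^ 2 * u t ^ 2)).
  { intros t Ht th Hth Ey. destruct (Hmcf t Ht) as [Hc [Hv _]].
    pose proof (key g m1 m2 n (y t) Hg Hm1 Hodd Hn Hc Hv) as K.
    rewrite (ratio_eq g m1 m2 n (y t) (u t) (snd (zpow (y t) g))); auto.
    - rewrite Ey, zpow_polar. reflexivity.
    - rewrite Ey, zpow_polar. apply Rgt_not_eq, Im_pos; auto. }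
  split.
  - intros Hg1' t Ht. subst g.
    assert (Em : m1 = m2) by (apply Hodd; reflexivity). subst m2.
    destruct (Pol t Ht) as [th [Hth Ey]].
    rewrite (Ratio t Ht th Hth Ey).
    pose proof (Hunz t Ht) as Hut. unfold u in Hut |- *. rewrite Ey, zpow_polar in *.
    cbn [fst] in *. unfold delta in *. replace (INR m1 - INR m1) with 0 in * by ring.
    replace (0 / (INR m1 + INR m1)) with 0 in * by (field; lra). rewrite Rplus_0_r in *.
    rewrite normAS2_trig. unfold sumk; cbn [seq fold_right]. unfold mult; cbn [Nat.odd Nat.even negb].
    unfold Ak. replace (INR 1 * PI / INR 1 - th) with (- th + PI) by (simpl; field).
    rewrite neg_cos, neg_sin, cos_neg, sin_neg.
    replace (INR 1 * th) with th in * by (simpl; ring).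
    assert (INR n = INR m1) by (simpl in HN; lra).
    rewrite H. pose proof (Im_pos 1 th ltac:(lia) Hth) as HI.
    replace (INR 1 * th) with th in HI by (simpl; ring).
    field. repeat split; lra.
  - intros Hg2.
    set (a := INR g * INR n).
    assert (Ap : 0 < a) by (unfold a; nra).
    set (d := delta m1 m2).
    assert (Dd : 0 <= d < 1).
    { unfold d, delta. split.
      - apply Rmult_le_pos; [lra| left; apply Rinv_0_lt_compat; lra].
      - apply (Rmult_lt_reg_r (INR m1 + INR m2)); [lra|]. field_simplify; lra. }
    set (K := 2 * Rabs U0 / (1 - d)).
    assert (Kp : 0 < K).
    { unfold K. apply Rdiv_lt_0_compat; [|lra]. pose proof (Rabs_pos_lt U0 U0nz). lra. }
    set (sg := 1 - cos (PI / INR g)).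
    assert (Sgp : 0 < sg).
    { unfold sg. assert (HG : 2 <= INR g) by (apply (le_INR 2); lia).
      assert (0 < PI / INR g < PI).
      { pose proof PI_RGT_0. split. apply Rdiv_lt_0_compat; lra.
        apply (Rmult_lt_reg_r (INR g)); [lra|]. unfold Rdiv. rewrite Rmult_assoc, Rinv_l by lra. nra. }
      pose proof (cos_lt_1' _ H). lra. }
    set (io := 1 - ((1 + d) / 2) ^ 2).
    assert (Iop : 0 < io) by (unfold io; nra).
    set (C := INR n ^ 2 * U0 ^ 2).
    assert (Cp : 0 < C) by (unfold C; apply Rmult_lt_0_compat; apply pow2_gt_0; (lra || auto)).
    exists (Rabs (ln K) / a + 1), (INR g * ((INR m1 + INR m2) * INR g ^ 2) / C), (sg * io / C).
    split. { pose proof (Rabs_pos (ln K)). assert (0 <= Rabs (ln K) / a) by (apply Rmult_le_pos; [lra| left; apply Rinv_0_lt_compat; lra]). lra. }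
    split. { apply Rdiv_lt_0_compat; auto. apply Rmult_lt_0_compat; auto. apply Rmult_lt_0_compat. lra. apply pow2_gt_0; (lra || auto). }
    split. { apply Rdiv_lt_0_compat; auto. apply Rmult_lt_0_compat; auto. }
    intros t Ht.
    assert (T1 : 0 <= Rabs (ln K) / a) by (apply Rmult_le_pos; [apply Rabs_pos| left; apply Rinv_0_lt_compat; lra]).
    assert (Ht0 : t <= 0) by lra.
    destruct (Pol t Ht0) as [th [Hth Ey]].
    rewrite (Ratio t Ht0 th Hth Ey).
    set (E := exp (a * t)).
    assert (Ep : 0 < E) by apply exp_pos.
    assert (EF : exp (- 2 * INR g * INR n * t) = / (E * E)).
    { unfold E. rewrite <- exp_plus, <- exp_Ropp. f_equal. unfold a. ring. }
    rewrite EF.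
    assert (EU : u t = U0 * E) by (apply Hu; auto).
    rewrite EU.
    set (B := normAS2 g m1 m2 (cos th, sin th) * sin (INR g * th) ^ 2).
    assert (RB : B / (INR n ^ 2 * (U0 * E) ^ 2) = (B / C) * / (E * E)).
    { unfold C. field. repeat split; lra. }
    rewrite RB.
    assert (IE : 0 < / (E * E)) by (apply Rinv_0_lt_compat; nra).
    assert (Bup : B <= INR g * ((INR m1 + INR m2) * INR g ^ 2)) by (apply upper_bound; auto).
    assert (Slo : sg <= normAS2 g m1 m2 (cos th, sin th)) by (apply lower_bound; auto).
    assert (SmallE : Rabs U0 * E < (1 - d) / 2).
    { assert (E < / K).
      { unfold E. rewrite <- (exp_ln K Kp), <- exp_Ropp.
        apply exp_increasing.
        assert (a * t < - Rabs (ln K)).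
        { assert (t < - (Rabs (ln K) / a)) by lra.
          apply (Rmult_lt_compat_l a) in H; auto.
          replace (a * - (Rabs (ln K) / a)) with (- Rabs (ln K)) in H by (field; lra). lra. }
        pose proof (Rle_abs (ln K)). lra. }
      pose proof (Rabs_pos_lt U0 U0nz).
      apply (Rmult_lt_compat_l (Rabs U0)) in H; auto.
      replace (Rabs U0 * / K) with ((1 - d) / 2) in H by (unfold K; field; split; lra). exact H. }
    assert (Re : cos (INR g * th) = U0 * E - d).
    { rewrite <- EU. unfold u. rewrite Ey, zpow_polar. cbn [fst]. fold d. ring. }
    assert (Ilo : io <= sin (INR g * th) ^ 2).
    { pose proof (sin2_cos2 (INR g * th)). unfold Rsqr in H.
      assert (Rabs (U0 * E) < (1 - d) / 2) by (rewrite Rabs_mult, (Rabs_right E) by lra; lra).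
      apply Rabs_def2 in H1.
      assert (Rabs (cos (INR g * th)) <= (1 + d) / 2) by (apply Rabs_le; rewrite Re; lra).
      pose proof (Rabs_pos (cos (INR g * th))).
      assert (cos (INR g * th) ^ 2 <= ((1 + d) / 2) ^ 2).
      { rewrite <- pow2_abs. assert (0 <= (1 + d) / 2) by lra. simpl. nra. }
      unfold io. simpl in *. lra. }
    assert (Blo : sg * io <= B).
    { unfold B. apply Rmult_le_compat; lra. }
    split.
    + unfold Rdiv. rewrite Rmult_assoc, (Rmult_comm (/ C)), <- Rmult_assoc.
      rewrite (Rmult_assoc B), (Rmult_comm (/ C)), <- Rmult_assoc.
      apply Rmult_le_compat_r. left; apply Rinv_0_lt_compat; lra.
      apply Rmult_le_compat_r; lra.
    + unfold Rdiv. apply Rmult_le_compat_r; [lra|]. apply Rmult_le_compat_r; [left; apply Rinv_0_lt_compat; lra|]. lra.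
Qed.
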